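(* Let $\ell>0$, $M=\mathbb R\times\{x\in\mathbb R^2:|x|<\ell\}$ with coordinates $(t,x^1,x^2)$, $\lambda(x)=\log\frac{2}{1-|x|^2/\ell^2}$ and $\kappa=-\lambda$. Take the Newton-Cartan background $$\tau_\mu dx^\mu=e^{\kappa}dt,\qquad e_\mu{}^adx^\mu=e^{\lambda}dx^a,\qquad m_\mu dx^\mu=\phi\, e^{\kappa}dt\ \text{ with }\ \phi=e^{-\kappa}$$ (so $m_\mu dx^\mu=dt$), and background fields $u=0$, $v=0$, and $v_\mu$ determined by $v_0=0$, $(v^1,v^2)=-\tfrac32\big(x^2/\ell^2,\,-x^1/\ell^2\big)$. Then the system (S$_+$) of Theorem 2 has two linearly independent nowhere-vanishing solutions, namely $\zeta_+=\exp\!\big(\tfrac{\kappa}{2}+\tfrac{\pi}{8}\gamma_0\big)\zeta_0$ for any constant Majorana spinor $\zeta_0\neq0$. Moreover, for this background the boost connection $\omega_\mu{}^a$ vanishes identically.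
   Context: Conventions: $\tau^\mu,e^\mu{}_a$ are the projective inverses ($\tau^\mu\tau_\mu=1$, $\tau^\mu e_\mu{}^a=0$, $e^\mu{}_a\tau_\mu=0$, $e^\mu{}_ae_\mu{}^b=\delta^b_a$); $v_0=\tau^\mu v_\mu$, $v_a=e^\mu{}_av_\mu$, $v^a=v_a$. $\epsilon_{12}=\epsilon^{12}=1$. $\tau_{\mu\nu}=2\partial_{[\mu}\tau_{\nu]}$, $\tau_{ab}=e^\mu{}_ae^\nu{}_b\tau_{\mu\nu}$, $\tau_{0a}=\tau^\mu e^\nu{}_a\tau_{\mu\nu}$, $\tau_{0\mu}=\tau^\nu\tau_{\nu\mu}$, $\tau^{a0}=\tau_{0a}$. Spin connections: $\omega_\mu{}^a = e^{\nu a}\partial_{[\mu}m_{\nu]} - e_\mu{}^be^{\nu a}\tau^\rho\partial_{[\nu}e_{\rho]b} - \tau^\nu\partial_{[\mu}e_{\nu]}{}^a - \tau_\mu e^{\nu a}\tau^\rho\partial_{[\nu}m_{\rho]}$, $\omega_\mu{}^{ab} = 2e^{\nu[a}\partial_{[\mu}e_{\nu]}{}^{b]} - e_\mu{}^ce^{\nu a}e^{\rho b}\partial_{[\nu}e_{\rho]c} - \tau_\mu e^{\nu a}e^{\rho b}\partial_{[\nu}m_{\rho]}$. Gamma matrices: $2\times2$, $\gamma_0^2=-\mathbb1$, $\{\gamma_a,\gamma_b\}=2\delta_{ab}$, $\{\gamma_0,\gamma_a\}=0$, $\gamma^a=\gamma_a$, $\gamma^0=-\gamma_0$, $\gamma_{ab}=\epsilon_{ab}\gamma_0$,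 $\gamma_{a0}=\epsilon_{ab}\gamma_b$; Majorana: $\zeta^*=\mathrm i\mathcal C_3\gamma^0\zeta$ with $\mathcal C_3^T=-\mathcal C_3$, $\gamma^T=-\mathcal C_3\gamma\mathcal C_3^{-1}$. $D_\mu\zeta=\partial_\mu\zeta+\tfrac14\omega_\mu{}^{ab}\gamma_{ab}\zeta$. System (S$_+$) for a commuting Majorana spinor $\zeta_+$: $(4v+\epsilon^{ab}\tau_{ab})\gamma_0\zeta_+=0$; $(\tfrac32\tau^{a0}\gamma_{a0}-\gamma^av_a+\mathrm{Re}(u)\gamma_0-\mathrm{Im}(u))\zeta_+=0$; $(\omega_\mu{}^a\gamma_{a0}+\tfrac13e_\mu{}^av_0\gamma_a)\zeta_+=0$; $D_\mu\zeta_+=(-\tfrac14\tau_{0\mu}-\tfrac12v_\mu\gamma_0+\tfrac16e_\mu{}^av^b\gamma_a\gamma_b\gamma_0+\tfrac13\tau_\mu v_0\gamma_0-\tfrac16\mathrm{Re}(u)e_\mu{}^a\gamma_a-\tfrac16\mathrm{Im}(u)e_\mu{}^a\gamma_{a0})\zeta_+$. *)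

(* Defs.v *)
From Stdlib Require Import Reals Lra.
From Coquelicot Require Import Coquelicot.
Open Scope R_scope.

Definition pt := (R * R * R)%type.
Definition coord (p : pt) (mu : nat) : R :=
  match mu with 0%nat => fst (fst p) | 1%nat => snd (fst p) | _ => snd p end.
Definition upd (p : pt) (mu : nat) (s : R) : pt :=
  match mu with
  | 0%nat => (s, snd (fst p), snd p)
  | 1%nat => (fst (fst p), s, snd p)
  | _ => (fst (fst p), snd (fst p), s) end.
Definition pd (mu : nat) (f : pt -> R) (p : pt) : R :=
  Derive (fun s => f (upd p mu s)) (coord p mu).

(* spacetime indices mu in {0,1,2}; frame (spatial) indices a in {1,2} *)
Definition sumM (f : nat -> R) : R := f 0%nat + f 1%nat + f 2%nat.
Definition sumF (f : nat -> R) : R := f 1%nat + f 2%nat.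
Definition delta (a b : nat) : R := if Nat.eqb a b then 1 else 0.
(* epsilon_{12} = epsilon^{12} = 1 *)
Definition eps (a b : nat) : R :=
  match a, b with 1%nat, 2%nat => 1 | 2%nat, 1%nat => -1 | _, _ => 0 end.

Definition Sp := (C * C)%type.
Record Mat := mkMat { m11 : C; m12 : C; m21 : C; m22 : C }.
Definition mapply (A : Mat) (z : Sp) : Sp :=
  (Cplus (Cmult (m11 A) (fst z)) (Cmult (m12 A) (snd z)),
   Cplus (Cmult (m21 A) (fst z)) (Cmult (m22 A) (snd z))).
Definition mmul (A B : Mat) : Mat :=
  mkMat (Cplus (Cmult (m11 A) (m11 B)) (Cmult (m12 A) (m21 B)))
        (Cplus (Cmult (m11 A) (m12 B)) (Cmult (m12 A) (m22 B)))
        (Cplus (Cmult (m21 A) (m11 B)) (Cmult (m22 A) (m21 B)))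
        (Cplus (Cmult (m21 A) (m12 B)) (Cmult (m22 A) (m22 B))).
Definition madd (A B : Mat) : Mat :=
  mkMat (Cplus (m11 A) (m11 B)) (Cplus (m12 A) (m12 B))
        (Cplus (m21 A) (m21 B)) (Cplus (m22 A) (m22 B)).
Definition mscal (c : C) (A : Mat) : Mat :=
  mkMat (Cmult c (m11 A)) (Cmult c (m12 A)) (Cmult c (m21 A)) (Cmult c (m22 A)).
Definition rscal (r : R) (A : Mat) : Mat := mscal (RtoC r) A.
Definition mzero : Mat := mkMat (RtoC 0) (RtoC 0) (RtoC 0) (RtoC 0).
Definition mid : Mat := mkMat (RtoC 1) (RtoC 0) (RtoC 0) (RtoC 1).
Definition spzero : Sp := (RtoC 0, RtoC 0).
Definition spadd (z w : Sp) : Sp := (Cplus (fst z) (fst w), Cplus (snd z) (snd w)).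
Definition spscal (r : R) (z : Sp) : Sp := (Cmult (RtoC r) (fst z), Cmult (RtoC r) (snd z)).
Definition spconj (z : Sp) : Sp := (Cconj (fst z), Cconj (snd z)).
Definition msumM (f : nat -> Mat) : Mat := madd (madd (f 0%nat) (f 1%nat)) (f 2%nat).
Definition msumF (f : nat -> Mat) : Mat := madd (f 1%nat) (f 2%nat).

(* ---------- Gamma matrices (a concrete real representation) ----------
   gamma_1 = sigma_3, gamma_2 = sigma_1, gamma_0 = gamma_1 gamma_2 = [[0,1],[-1,0]].
   They satisfy gamma_0^2 = -1, {gamma_a,gamma_b} = 2 delta_ab, {gamma_0,gamma_a} = 0,
   gamma_{ab} = eps_ab gamma_0, gamma_{a0} = eps_ab gamma_b. *)
Definition gam (A : nat) : Mat :=
  match A with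
  | 0%nat => mkMat (RtoC 0) (RtoC 1) (RtoC (-1)) (RtoC 0)
  | 1%nat => mkMat (RtoC 1) (RtoC 0) (RtoC 0) (RtoC (-1))
  | _ => mkMat (RtoC 0) (RtoC 1) (RtoC 1) (RtoC 0) end.
Definition gamUp (A : nat) : Mat :=
  match A with 0%nat => rscal (-1) (gam 0%nat) | _ => gam A end.
Definition gam2 (A B : nat) : Mat :=
  rscal (1/2) (madd (mmul (gam A) (gam B)) (rscal (-1) (mmul (gam B) (gam A)))).
(* charge conjugation matrix: C_3 = -i eps, with C_3^T = -C_3 and gamma^T = -C_3 gamma C_3^{-1} *)
Definition C3 : Mat := mkMat (RtoC 0) (Copp Ci) Ci (RtoC 0).
Definition majorana (z : Sp) : Prop :=
  spconj z = mapply (mscal Ci (mmul C3 (gamUp 0%nat))) z.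

Definition pdC (mu : nat) (f : pt -> C) (p : pt) : C :=
  (pd mu (fun q => fst (f q)) p, pd mu (fun q => snd (f q)) p).
Definition pdSp (mu : nat) (z : pt -> Sp) (p : pt) : Sp :=
  (pdC mu (fun q => fst (z q)) p, pdC mu (fun q => snd (z q)) p).

(* ---------- Newton-Cartan geometry ----------
   tau mu = tau_mu,  e mu a = e_mu^a,  m mu = m_mu,
   tauI mu = tau^mu, eI mu a = e^mu_a (projective inverses). *)
Section NC.
Variables (tau : pt -> nat -> R) (e : pt -> nat -> nat -> R) (m : pt -> nat -> R)
          (tauI : pt -> nat -> R) (eI : pt -> nat -> nat -> R).

Definition projective_inverse (p : pt) : Prop :=
  sumM (fun mu => tauI p mu * tau p mu) = 1 /\
  (forall a, (a = 1 \/ a = 2)%nat -> sumM (fun mu => tauI p mu * e p mu a) = 0) /\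
  (forall a, (a = 1 \/ a = 2)%nat -> sumM (fun mu => eI p mu a * tau p mu) = 0) /\
  (forall a b, (a = 1 \/ a = 2)%nat -> (b = 1 \/ b = 2)%nat ->
     sumM (fun mu => eI p mu a * e p mu b) = delta a b).

Definition dAm (p : pt) (mu nu : nat) : R :=
  (pd mu (fun q => m q nu) p - pd nu (fun q => m q mu) p) / 2.
Definition dAe (p : pt) (b mu nu : nat) : R :=
  (pd mu (fun q => e q nu b) p - pd nu (fun q => e q mu b) p) / 2.
Definition dAtau (p : pt) (mu nu : nat) : R :=
  (pd mu (fun q => tau q nu) p - pd nu (fun q => tau q mu) p) / 2.

Definition tauF (p : pt) (mu nu : nat) : R := 2 * dAtau p mu nu.
Definition tauFF (p : pt) (a b : nat) : R :=
  sumM (fun mu => sumM (fun nu => eI p mu a * eI p nu b * tauF p mu nu)).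
(* tau_{0a} = tau^{a0} *)
Definition tau0F (p : pt) (a : nat) : R :=
  sumM (fun mu => sumM (fun nu => tauI p mu * eI p nu a * tauF p mu nu)).
Definition tau0M (p : pt) (mu : nat) : R := sumM (fun nu => tauI p nu * tauF p nu mu).

Definition omega1 (p : pt) (mu a : nat) : R :=
  sumM (fun nu => eI p nu a * dAm p mu nu)
  - sumF (fun b => sumM (fun nu => sumM (fun rho =>
        e p mu b * eI p nu a * tauI p rho * dAe p b nu rho)))
  - sumM (fun nu => tauI p nu * dAe p a mu nu)
  - tau p mu * sumM (fun nu => sumM (fun rho => eI p nu a * tauI p rho * dAm p nu rho)).

Definition omega2 (p : pt) (mu a b : nat) : R :=
  sumM (fun nu => eI p nu a * dAe p b mu nu - eI p nu b * dAe p a mu nu)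
  - sumF (fun c => sumM (fun nu => sumM (fun rho =>
        e p mu c * eI p nu a * eI p rho b * dAe p c nu rho)))
  - tau p mu * sumM (fun nu => sumM (fun rho => eI p nu a * eI p rho b * dAm p nu rho)).

Definition Dcov (z : pt -> Sp) (p : pt) (mu : nat) : Sp :=
  spadd (pdSp mu z p)
    (mapply (rscal (1/4) (msumF (fun a => msumF (fun b => rscal (omega2 p mu a b) (gam2 a b)))))
            (z p)).

Definition Splus (v : pt -> R) (u : pt -> C) (vv : pt -> nat -> R)
           (z : pt -> Sp) (p : pt) : Prop :=
  let v0 := sumM (fun mu => tauI p mu * vv p mu) in
  let vF := fun a => sumM (fun mu => eI p mu a * vv p mu) in
  mapply (rscal (4 * v p + sumF (fun a => sumF (fun b => eps a b * tauFF p a b))) (gam 0%nat)) (z p)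
    = spzero /\
  mapply (madd (madd (madd
      (rscal (3/2) (msumF (fun a => rscal (tau0F p a) (gam2 a 0%nat))))
      (rscal (-1) (msumF (fun a => rscal (vF a) (gamUp a)))))
      (rscal (fst (u p)) (gam 0%nat)))
      (rscal (- snd (u p)) mid)) (z p) = spzero /\
  (forall mu, (mu <= 2)%nat ->
     mapply (madd (msumF (fun a => rscal (omega1 p mu a) (gam2 a 0%nat)))
                  (msumF (fun a => rscal (1/3 * e p mu a * v0) (gam a)))) (z p) = spzero) /\
  (forall mu, (mu <= 2)%nat ->
     Dcov z p mu =
     mapply (madd (madd (madd (madd (madd
       (rscal (-1/4 * tau0M p mu) mid)
       (rscal (-1/2 * vv p mu) (gam 0%nat)))
       (msumF (fun a => msumF (fun b =>
          rscal (1/6 * e p mu a * vF b) (mmul (mmul (gam a) (gam b)) (gam 0%nat))))))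
       (rscal (1/3 * tau p mu * v0) (gam 0%nat)))
       (rscal (-1/6 * fst (u p)) (msumF (fun a => rscal (e p mu a) (gam a)))))
       (rscal (-1/6 * snd (u p)) (msumF (fun a => rscal (e p mu a) (gam2 a 0%nat)))))
       (z p)).

End NC.

Definition rsq (p : pt) : R := coord p 1 ^ 2 + coord p 2 ^ 2.
Definition inM (l : R) (p : pt) : Prop := rsq p < l ^ 2.
Definition lam (l : R) (p : pt) : R := ln (2 / (1 - rsq p / l ^ 2)).
Definition kap (l : R) (p : pt) : R := - lam l p.
Definition phiB (l : R) (p : pt) : R := exp (- kap l p).
Definition tauB (l : R) (p : pt) (mu : nat) : R :=
  match mu with 0%nat => exp (kap l p) | _ => 0 end.
Definition eB (l : R) (p : pt) (mu a : nat) : R :=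
  if ((1 <=? mu)%nat && (mu <=? 2)%nat && Nat.eqb mu a)%bool then exp (lam l p) else 0.
Definition mB (l : R) (p : pt) (mu : nat) : R :=
  match mu with 0%nat => phiB l p * exp (kap l p) | _ => 0 end.
Definition uB (p : pt) : C := RtoC 0.
Definition vB (p : pt) : R := 0.
Definition vFB (l : R) (p : pt) (a : nat) : R :=
  match a with
  | 1%nat => -3/2 * (coord p 2 / l ^ 2)
  | 2%nat => -3/2 * (- coord p 1 / l ^ 2)
  | _ => 0 end.

(* exp(alpha 1 + beta gamma_0) = e^alpha (cos beta 1 + sin beta gamma_0), since gamma_0^2 = -1
   and 1 commutes with gamma_0 *)
Definition expG (alpha beta : R) : Mat :=
  rscal (exp alpha) (madd (rscal (cos beta) mid) (rscal (sin beta) (gam 0%nat))).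

Definition zetaPlus (l : R) (z0 : Sp) (p : pt) : Sp :=
  mapply (expG (kap l p / 2) (PI / 8)) z0.

(* Main.v *)
Require Import Defs.
From Stdlib Require Import Reals Lra Lia.
From Coquelicot Require Import Coquelicot.
Open Scope R_scope.

Definition Lf (l : R) (p : pt) (mu : nat) : R :=
  match mu with 0%nat => 0 | 1%nat => 2 * coord p 1 / l^2 / (1 - rsq p / l^2)
  | _ => 2 * coord p 2 / l^2 / (1 - rsq p / l^2) end.
Lemma w_pos l p : 0 < l -> inM l p -> 0 < 1 - rsq p / l^2.
Proof. intros hl H. unfold inM in H. assert (0 < l^2) by nra.
apply Rlt_0_minus. apply (Rmult_lt_reg_r (l^2)); auto. field_simplify; lra. Qed.
Ltac sidec W := unfold Rdiv in W; repeat split; 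
  [lra | apply Rmult_lt_0_compat; [lra | apply Rinv_0_lt_compat; lra] ].
Lemma lam_der l p mu : 0 < l -> inM l p ->
  is_derive (fun s => lam l (upd p mu s)) (coord p mu) (Lf l p mu).
Proof. intros hl H. pose proof (w_pos l p hl H) as W.
destruct p as [[t x] y]. unfold inM, lam, Lf, rsq in *. simpl in *.
destruct mu as [|[|mu]]; simpl.
- auto_derive; [auto|ring].
- auto_derive. sidec W. 
  field. split; nra.
- auto_derive. sidec W. field. split; nra.
Qed.
Lemma upd_coord p mu : upd p mu (coord p mu) = p.
Proof. destruct p as [[t x] y]; destruct mu as [|[|mu]]; reflexivity. Qed.
Lemma D_expg (g : pt -> R) k a p mu d :
  is_derive (fun s => g (upd p mu s)) (coord p mu) d ->
  Derive (fun s => exp (k * g (upd p mu s)) * a) (coord p mu) = exp (k * g p) * (k * d) * a.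
Proof. intros Hd. apply is_derive_unique.
assert (H1 := is_derive_scal _ _ k _ Hd).
assert (H2 := is_derive_comp exp _ _ _ _ (is_derive_exp _) H1).
assert (H3 := is_derive_scal_l _ _ _ a H2).
simpl in H3. rewrite upd_coord in H3. unfold scal in H3; simpl in H3.
unfold mult in H3; simpl in H3.
replace (exp (k * g p) * (k * d) * a) with ((k * d * exp (k * g p)) * a) by ring.
exact H3.
Qed.
Lemma pd_eB l p mu nu c : 0 < l -> inM l p ->
  pd mu (fun q => eB l q nu c) p = eB l p nu c * Lf l p mu.
Proof. intros hl H. unfold pd, eB.
destruct ((1 <=? nu)%nat && (nu <=? 2)%nat && Nat.eqb nu c)%bool.
- rewrite (Derive_ext _ (fun s => exp (1 * lam l (upd p mu s)) * 1)).
  + rewrite (D_expg (lam l) 1 1 p mu (Lf l p mu)) by (apply lam_der; auto). rewrite !Rmult_1_l; ring.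
  + intros; rewrite Rmult_1_l, Rmult_1_r; reflexivity.
- rewrite Derive_const. ring.
Qed.
Lemma pd_tauB l p mu nu : 0 < l -> inM l p ->
  pd mu (fun q => tauB l q nu) p = - tauB l p nu * Lf l p mu.
Proof. intros hl H. unfold pd. destruct nu as [|nu]; simpl.
- rewrite (Derive_ext _ (fun s => exp ((-1) * lam l (upd p mu s)) * 1)).
  + rewrite (D_expg (lam l) (-1) 1 p mu (Lf l p mu)) by (apply lam_der; auto).
    unfold kap. replace (-1 * lam l p) with (- lam l p) by ring. ring.
  + intros; unfold kap. rewrite Rmult_1_r. f_equal. ring.
- rewrite Derive_const. ring.
Qed.
Lemma mB_one l q nu : mB l q nu = match nu with 0%nat => 1 | _ => 0 end.
Proof. destruct nu; simpl; auto. unfold phiB. rewrite exp_Ropp. field. apply Rgt_not_eq, exp_pos. Qed.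
Lemma pd_mB l p mu nu : pd mu (fun q => mB l q nu) p = 0.
Proof. unfold pd. rewrite (Derive_ext _ (fun _ => match nu with 0%nat => 1 | _ => 0 end)).
 apply Derive_const. intros; apply mB_one. Qed.
Lemma exp_lam l p : 0 < l -> inM l p -> exp (lam l p) = 2 / (1 - rsq p / l^2).
Proof. intros hl H. pose proof (w_pos l p hl H). unfold lam. rewrite exp_ln; auto.
apply Rdiv_lt_0_compat; lra. Qed.
Lemma exp_kap l p : 0 < l -> inM l p -> exp (kap l p) = (1 - rsq p / l^2) / 2.
Proof. intros hl H. pose proof (w_pos l p hl H). unfold kap. rewrite exp_Ropp, exp_lam; auto.
set (w := 1 - rsq p / l^2) in *. field. lra. Qed.

Section Main.
Variables (l : R) (hl : 0 < l)
  (tauI : pt -> nat -> R) (eI : pt -> nat -> nat -> R) (vv : pt -> nat -> R)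
  (Hinv : forall p, inM l p -> projective_inverse (tauB l) (eB l) tauI eI p)
  (Hv0 : forall p, inM l p -> sumM (fun mu => tauI p mu * vv p mu) = 0)
  (HvF : forall p a, inM l p -> (a = 1 \/ a = 2)%nat ->
           sumM (fun mu => eI p mu a * vv p mu) = vFB l p a).

Lemma inv_vals p : inM l p ->
  let w := 1 - rsq p / l^2 in
  tauI p 0%nat = 2 / w /\ tauI p 1%nat = 0 /\ tauI p 2%nat = 0 /\
  eI p 0%nat 1%nat = 0 /\ eI p 0%nat 2%nat = 0 /\ eI p 1%nat 1%nat = w / 2 /\
  eI p 1%nat 2%nat = 0 /\ eI p 2%nat 1%nat = 0 /\ eI p 2%nat 2%nat = w / 2.
Proof. intros H w. pose proof (w_pos l p hl H) as W. fold w in W.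
destruct (Hinv p H) as [h1 [h2 [h3 h4]]].
pose proof (h2 1%nat ltac:(auto)) as h21. pose proof (h2 2%nat ltac:(auto)) as h22.
pose proof (h3 1%nat ltac:(auto)) as h31. pose proof (h3 2%nat ltac:(auto)) as h32.
pose proof (h4 1%nat 1%nat ltac:(auto) ltac:(auto)) as h411.
pose proof (h4 1%nat 2%nat ltac:(auto) ltac:(auto)) as h412.
pose proof (h4 2%nat 1%nat ltac:(auto) ltac:(auto)) as h421.
pose proof (h4 2%nat 2%nat ltac:(auto) ltac:(auto)) as h422.
clear h2 h3 h4.
unfold sumM, tauB, eB, delta in h1, h21, h22, h31, h32, h411, h412, h421, h422; simpl in h1, h21, h22, h31, h32, h411, h412, h421, h422.
rewrite (exp_lam l p hl H) in *. rewrite (exp_kap l p hl H) in *. fold w in h1, h21, h22, h31, h32, h411, h412, h421, h422.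
repeat split.
- apply (Rmult_eq_reg_r (w/2)); [|lra]. field_simplify; [|lra]. lra.
- apply (Rmult_eq_reg_r (2/w)); [|apply Rgt_not_eq, Rdiv_lt_0_compat; lra]. lra.
- apply (Rmult_eq_reg_r (2/w)); [|apply Rgt_not_eq, Rdiv_lt_0_compat; lra]. lra.
- apply (Rmult_eq_reg_r (w/2)); [|lra]. lra.
- apply (Rmult_eq_reg_r (w/2)); [|lra]. lra.
- apply (Rmult_eq_reg_r (2/w)); [|apply Rgt_not_eq, Rdiv_lt_0_compat; lra]. field_simplify; lra.
- apply (Rmult_eq_reg_r (2/w)); [|apply Rgt_not_eq, Rdiv_lt_0_compat; lra]. lra.
- apply (Rmult_eq_reg_r (2/w)); [|apply Rgt_not_eq, Rdiv_lt_0_compat; lra]. lra.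
- apply (Rmult_eq_reg_r (2/w)); [|apply Rgt_not_eq, Rdiv_lt_0_compat; lra]. field_simplify; lra.
Qed.

Lemma vv_vals p : inM l p ->
  let w := 1 - rsq p / l^2 in
  vv p 0%nat = 0 /\ vv p 1%nat = 2 / w * vFB l p 1 /\ vv p 2%nat = 2 / w * vFB l p 2.
Proof. intros H w. pose proof (w_pos l p hl H) as W. fold w in W.
destruct (inv_vals p H) as (t0 & t1 & t2 & e01 & e02 & e11 & e12 & e21 & e22).
fold w in t0, e11, e22.
pose proof (Hv0 p H) as h0. pose proof (HvF p 1%nat H ltac:(auto)) as h1.
pose proof (HvF p 2%nat H ltac:(auto)) as h2.
unfold sumM in h0, h1, h2. rewrite t0, t1, t2 in h0. rewrite e01, e11, e21 in h1.
rewrite e02, e12, e22 in h2.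
repeat split.
- apply (Rmult_eq_reg_l (2/w)); [|apply Rgt_not_eq, Rdiv_lt_0_compat; lra]. lra.
- rewrite <- h1. field. lra.
- rewrite <- h2. field. lra.
Qed.

Lemma omega1_zero p mu a : inM l p -> (a = 1 \/ a = 2)%nat ->
  omega1 (tauB l) (eB l) (mB l) tauI eI p mu a = 0.
Proof. intros H Ha.
destruct (inv_vals p H) as (t0 & t1 & t2 & e01 & e02 & e11 & e12 & e21 & e22).
unfold omega1, dAm, dAe, sumM, sumF.
rewrite !pd_mB. rewrite !(pd_eB l p) by auto.
rewrite t1, t2.
destruct Ha as [-> | ->]; destruct mu as [|[|[|mu]]]; unfold eB, tauB; simpl; unfold Rdiv; ring.
Qed.
End Main.
Definition Z0 (z0 : Sp) : Sp := mapply (expG 0 (PI / 8)) z0.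
Lemma zeta_comp l z0 q :
  fst (fst (zetaPlus l z0 q)) = exp (-1/2 * lam l q) * fst (fst (Z0 z0)) /\
  snd (fst (zetaPlus l z0 q)) = exp (-1/2 * lam l q) * snd (fst (Z0 z0)) /\
  fst (snd (zetaPlus l z0 q)) = exp (-1/2 * lam l q) * fst (snd (Z0 z0)) /\
  snd (snd (zetaPlus l z0 q)) = exp (-1/2 * lam l q) * snd (snd (Z0 z0)).
Proof. destruct z0 as [[a b] [c d]].
replace (-1/2 * lam l q) with (kap l q / 2) by (unfold kap; field).
cbv [zetaPlus Z0 expG mapply rscal mscal madd mid gam Cplus Cmult RtoC fst snd m11 m12 m21 m22].
rewrite exp_0. repeat split; ring. Qed.
Lemma pdSp_zeta l z0 p mu : 0 < l -> inM l p ->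
  pdSp mu (zetaPlus l z0) p = spscal (- Lf l p mu / 2) (zetaPlus l z0 p).
Proof. intros hl H. unfold pdSp, pdC, pd.
rewrite (Derive_ext (fun s => fst (fst (zetaPlus l z0 (upd p mu s))))
   (fun s => exp (-1/2 * lam l (upd p mu s)) * fst (fst (Z0 z0))))
  by (intros; apply zeta_comp).
rewrite (Derive_ext (fun s => snd (fst (zetaPlus l z0 (upd p mu s))))
   (fun s => exp (-1/2 * lam l (upd p mu s)) * snd (fst (Z0 z0))))
  by (intros; apply zeta_comp).
rewrite (Derive_ext (fun s => fst (snd (zetaPlus l z0 (upd p mu s))))
   (fun s => exp (-1/2 * lam l (upd p mu s)) * fst (snd (Z0 z0))))
  by (intros; apply zeta_comp).
rewrite (Derive_ext (fun s => snd (snd (zetaPlus l z0 (upd p mu s))))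
   (fun s => exp (-1/2 * lam l (upd p mu s)) * snd (snd (Z0 z0))))
  by (intros; apply zeta_comp).
rewrite !(D_expg (lam l) (-1/2) _ p mu (Lf l p mu)) by (apply lam_der; auto).
destruct (zeta_comp l z0 p) as (c1 & c2 & c3 & c4).
revert c1 c2 c3 c4; generalize (zetaPlus l z0 p); intros [[a b] [c d]] c1 c2 c3 c4.
cbn [fst snd] in c1, c2, c3, c4. rewrite c1, c2, c3, c4.
cbv [spscal Cmult RtoC]. cbn [fst snd]. f_equal; f_equal; unfold Rdiv; ring.
Qed.
Definition rM (x y z w : R) : Mat := mkMat (RtoC x) (RtoC y) (RtoC z) (RtoC w).
Lemma madd_r a b c d e f g h : madd (rM a b c d) (rM e f g h) = rM (a+e) (b+f) (c+g) (d+h).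
Proof. unfold madd, rM; cbn [m11 m12 m21 m22]. rewrite <- !RtoC_plus. reflexivity. Qed.
Lemma rscal_r r a b c d : rscal r (rM a b c d) = rM (r*a) (r*b) (r*c) (r*d).
Proof. unfold rscal, mscal, rM; cbn [m11 m12 m21 m22]. rewrite <- !RtoC_mult. reflexivity. Qed.
Lemma mmul_r a b c d e f g h : mmul (rM a b c d) (rM e f g h) =
  rM (a*e+b*g) (a*f+b*h) (c*e+d*g) (c*f+d*h).
Proof. unfold mmul, rM; cbn [m11 m12 m21 m22]. rewrite <- !RtoC_mult, <- !RtoC_plus. reflexivity. Qed.
Lemma mapply_r x y z w a b c d : mapply (rM x y z w) ((a, b), (c, d)) =
  ((x*a+y*c, x*b+y*d), (z*a+w*c, z*b+w*d)).
Proof. unfold mapply, rM, Cplus, Cmult, RtoC; cbn [fst snd m11 m12 m21 m22].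
f_equal; apply injective_projections; cbn [fst snd]; ring. Qed.
Lemma gam_r0 : gam 0 = rM 0 1 (-1) 0. Proof. reflexivity. Qed.
Lemma gam_r1 : gam 1 = rM 1 0 0 (-1). Proof. reflexivity. Qed.
Lemma gam_r2 : gam 2 = rM 0 1 1 0. Proof. reflexivity. Qed.
Lemma mid_r : mid = rM 1 0 0 1. Proof. reflexivity. Qed.
Lemma gamUp1 : gamUp 1 = gam 1. Proof. reflexivity. Qed.
Lemma gamUp2 : gamUp 2 = gam 2. Proof. reflexivity. Qed.
Lemma rM_eq a b c d a' b' c' d' : a = a' -> b = b' -> c = c' -> d = d' -> rM a b c d = rM a' b' c' d'.
Proof. intros; subst; reflexivity. Qed.
Ltac rmat := repeat (rewrite ?gam_r0, ?gam_r1, ?gam_r2, ?mid_r, ?madd_r, ?rscal_r, ?mmul_r).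
Lemma gam2_10 : gam2 1 0 = rM 0 1 1 0.
Proof. unfold gam2. rmat. f_equal; field. Qed.
Lemma gam2_20 : gam2 2 0 = rM (-1) 0 0 1.
Proof. unfold gam2. rmat. f_equal; field. Qed.
Lemma gam2_12 : gam2 1 2 = rM 0 1 (-1) 0.
Proof. unfold gam2. rmat. f_equal; field. Qed.
Lemma gam2_21 : gam2 2 1 = rM 0 (-1) 1 0.
Proof. unfold gam2. rmat. f_equal; field. Qed.
Lemma gam2_11 : gam2 1 1 = rM 0 0 0 0.
Proof. unfold gam2. rmat. f_equal; field. Qed.
Lemma gam2_22 : gam2 2 2 = rM 0 0 0 0.
Proof. unfold gam2. rmat. f_equal; field. Qed.
Lemma spzero_r : spzero = ((0,0),(0,0)). Proof. reflexivity. Qed.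
Lemma spadd_r a b c d a' b' c' d' : spadd ((a,b),(c,d)) ((a',b'),(c',d')) = ((a+a',b+b'),(c+c',d+d')).
Proof. reflexivity. Qed.
Lemma spscal_r r a b c d : spscal r ((a,b),(c,d)) = ((r*a, r*b),(r*c,r*d)).
Proof. unfold spscal, Cmult, RtoC; cbn [fst snd]. f_equal; apply injective_projections; cbn [fst snd]; ring. Qed.
Lemma fstR r : fst (RtoC r) = r. Proof. reflexivity. Qed.
Lemma sndR r : snd (RtoC r) = 0. Proof. reflexivity. Qed.
Ltac rfin := unfold msumF; rewrite ?fstR, ?sndR; rewrite ?gamUp1, ?gamUp2, ?gam2_10, ?gam2_20, ?gam2_12, ?gam2_21, ?gam2_11, ?gam2_22;
  rmat; rewrite ?mapply_r, ?spzero_r, ?spscal_r, ?spadd_r; f_equal; f_equal.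

Section Main2.
Variables (l : R) (hl : 0 < l)
  (tauI : pt -> nat -> R) (eI : pt -> nat -> nat -> R) (vv : pt -> nat -> R)
  (Hinv : forall p, inM l p -> projective_inverse (tauB l) (eB l) tauI eI p)
  (Hv0 : forall p, inM l p -> sumM (fun mu => tauI p mu * vv p mu) = 0)
  (HvF : forall p a, inM l p -> (a = 1 \/ a = 2)%nat ->
           sumM (fun mu => eI p mu a * vv p mu) = vFB l p a).

Ltac fin := cbv [mapply madd rscal mscal mmul mid gam gam2 gamUp msumF
   spzero spadd Cplus Cmult RtoC]; cbn [fst snd m11 m12 m21 m22]; f_equal; f_equal.

Definition om (l : R) (p : pt) (mu a b : nat) : R :=
  (if Nat.eqb mu a then Lf l p b else 0) - (if Nat.eqb mu b then Lf l p a else 0).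
Lemma omega2_val p mu a b : inM l p -> (mu <= 2)%nat -> (a = 1 \/ a = 2)%nat -> (b = 1 \/ b = 2)%nat ->
  omega2 (tauB l) (eB l) (mB l) eI p mu a b = om l p mu a b.
Proof. intros H Hmu Ha Hb.
destruct (inv_vals l hl tauI eI Hinv p H) as (t0 & t1 & t2 & e01 & e02 & e11 & e12 & e21 & e22).
pose proof (w_pos l p hl H) as W.
assert (Hl : l <> 0) by lra.
assert (Hw2 : l * l - rsq p <> 0) by (unfold inM in H; simpl in H; lra).
unfold omega2, dAe, dAm, sumM, sumF.
rewrite !(pd_eB l p) by auto. rewrite !pd_mB.
assert (mu = 0 \/ mu = 1 \/ mu = 2)%nat as Hm by lia.
destruct Hm as [-> | [-> | ->]]; destruct Ha as [-> | ->]; destruct Hb as [-> | ->];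
rewrite ?e01, ?e02, ?e11, ?e12, ?e21, ?e22;
unfold om, tauB, eB; simpl; rewrite ?(exp_lam l p hl H); simpl; simpl in W; field; repeat split; auto.
Qed.
Lemma tau0M_val p mu : inM l p -> tau0M (tauB l) tauI p mu = Lf l p mu.
Proof. intros H.
destruct (inv_vals l hl tauI eI Hinv p H) as (t0 & t1 & t2 & e01 & e02 & e11 & e12 & e21 & e22).
pose proof (w_pos l p hl H) as W.
unfold tau0M, tauF, dAtau, sumM. rewrite !(pd_tauB l p) by auto.
rewrite t0, t1, t2.
assert (Hl : l <> 0) by lra.
assert (Hw2 : l * l - rsq p <> 0) by (unfold inM in H; simpl in H; lra).
destruct mu as [|[|mu]]; unfold tauB, Lf; simpl; rewrite ?(exp_kap l p hl H); simpl; simpl in W;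
  field; repeat split; auto.
Qed.

Lemma tau0F_val p a : inM l p -> (a = 1 \/ a = 2)%nat ->
  tau0F (tauB l) tauI eI p a = coord p a / l ^ 2.
Proof. intros H Ha.
destruct (inv_vals l hl tauI eI Hinv p H) as (t0 & t1 & t2 & e01 & e02 & e11 & e12 & e21 & e22).
pose proof (w_pos l p hl H) as W.
assert (Hl : l <> 0) by lra.
assert (Hw2 : l * l - rsq p <> 0) by (unfold inM in H; simpl in H; lra).
unfold tau0F, tauF, dAtau, sumM. rewrite !(pd_tauB l p) by auto.
destruct Ha as [-> | ->]; rewrite t0, t1, t2, ?e01, ?e02, ?e11, ?e12, ?e21, ?e22;
unfold tauB, Lf; rewrite (exp_kap l p hl H); simpl; simpl in W; field; repeat split; auto.
Qed.
Lemma Lf_E p a : inM l p -> (a = 1 \/ a = 2)%nat ->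
  Lf l p a = 2 / (1 - rsq p / l ^ 2) * (coord p a / l ^ 2).
Proof. intros H Ha. pose proof (w_pos l p hl H) as W.
assert (Hl : l <> 0) by lra.
assert (Hw2 : l * l - rsq p <> 0) by (unfold inM in H; simpl in H; lra).
simpl in W. destruct Ha as [-> | ->]; unfold Lf; simpl; field; repeat split; auto. Qed.

End Main2.
Lemma trig_inv X Y a c th : cos th * a + sin th * c = X -> - sin th * a + cos th * c = Y ->
  a = cos th * X - sin th * Y /\ c = sin th * X + cos th * Y.
Proof. intros <- <-. pose proof (sin2_cos2 th) as e. unfold Rsqr in e. split.
- replace a with (a * (sin th * sin th + cos th * cos th)) at 1 by (rewrite e; ring). ring.
- replace c with (c * (sin th * sin th + cos th * cos th)) at 1 by (rewrite e; ring). ring.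
Qed.
Lemma zeta_expl l z0 q :
  let e := exp (kap l q / 2) in let th := PI / 8 in
  fst (fst (zetaPlus l z0 q)) = e * (cos th * fst (fst z0) + sin th * fst (snd z0)) /\
  snd (fst (zetaPlus l z0 q)) = e * (cos th * snd (fst z0) + sin th * snd (snd z0)) /\
  fst (snd (zetaPlus l z0 q)) = e * (- sin th * fst (fst z0) + cos th * fst (snd z0)) /\
  snd (snd (zetaPlus l z0 q)) = e * (- sin th * snd (fst z0) + cos th * snd (snd z0)).
Proof. intros e th. destruct z0 as [[a b] [c d]].
cbv [zetaPlus expG mapply rscal mscal madd mid gam Cplus Cmult RtoC fst snd m11 m12 m21 m22]. fold e th.
repeat split; ring. Qed.
Lemma majorana_iff z : majorana z <-> snd (fst z) = 0 /\ snd (snd z) = 0.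
Proof. destruct z as [[a b] [c d]]. cbv [majorana spconj mapply mscal mmul C3 gamUp rscal gam Cconj Ci Cplus Cmult RtoC Copp fst snd m11 m12 m21 m22]. split.
- intros Heq. injection Heq. intros. lra.
- intros [-> ->]. f_equal; f_equal; ring.
Qed.


Section Main3.
Variables (l : R) (hl : 0 < l)
  (tauI : pt -> nat -> R) (eI : pt -> nat -> nat -> R) (vv : pt -> nat -> R)
  (Hinv : forall p, inM l p -> projective_inverse (tauB l) (eB l) tauI eI p)
  (Hv0 : forall p, inM l p -> sumM (fun mu => tauI p mu * vv p mu) = 0)
  (HvF : forall p a, inM l p -> (a = 1 \/ a = 2)%nat ->
           sumM (fun mu => eI p mu a * vv p mu) = vFB l p a).

Lemma splus_holds z0 p : inM l p ->
  Splus (tauB l) (eB l) (mB l) tauI eI vB uB vv (zetaPlus l z0) p.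
Proof. intros H.
destruct (inv_vals l hl tauI eI Hinv p H) as (t0 & t1 & t2 & e01 & e02 & e11 & e12 & e21 & e22).
destruct (vv_vals l hl tauI eI vv Hinv Hv0 HvF p H) as (v0 & v1 & v2).
pose proof (w_pos l p hl H) as W.
assert (Hl : l <> 0) by lra.
unfold Splus; cbv zeta. rewrite (Hv0 p H).
split; [|split; [|split]].
- unfold tauFF, tauF, dAtau, sumM, sumF, eps. rewrite !(pd_tauB l p) by auto.
  rewrite e01, e02, e11, e12, e21, e22. unfold vB, tauB.
  generalize (zetaPlus l z0 p); intros [[a b] [c d]]. rfin; unfold Rdiv; ring.
- unfold msumF; cbv beta. rewrite !(tau0F_val l hl tauI eI Hinv) by auto.
  rewrite (HvF p 1%nat H (or_introl eq_refl)), (HvF p 2%nat H (or_intror eq_refl)).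
  unfold uB, vFB.
  generalize (zetaPlus l z0 p); intros [[a b] [c d]]. rfin; unfold Rdiv; ring.
- intros mu _. unfold msumF. rewrite !(omega1_zero l hl tauI eI Hinv) by auto.
  generalize (zetaPlus l z0 p); intros [[a b] [c d]]. rfin; ring.
- intros mu Hmu. unfold Dcov. rewrite (pdSp_zeta l z0 p mu hl H).
  unfold msumF; cbv beta.
  rewrite !(omega2_val l hl tauI eI Hinv) by auto. rewrite (tau0M_val l hl tauI eI Hinv) by auto.
  rewrite (HvF p 1%nat H (or_introl eq_refl)), (HvF p 2%nat H (or_intror eq_refl)).
  assert (mu = 0 \/ mu = 1 \/ mu = 2)%nat as Hm by lia.
  destruct Hm as [-> | [-> | ->]]; unfold om; cbn [Nat.eqb eB tauB Nat.leb andb];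
  rewrite ?v0, ?v1, ?v2;
  rewrite ?(Lf_E l hl p 1%nat H (or_introl eq_refl)), ?(Lf_E l hl p 2%nat H (or_intror eq_refl));
  rewrite ?(exp_lam l p hl H);
  unfold uB, vFB; generalize (2 / (1 - rsq p / l ^ 2)) as E;
  intro E; generalize (zetaPlus l z0 p); intros [[a b] [c d]]; rfin; unfold Lf; field; auto.
Qed.
End Main3.



Theorem mainTheorem6 (l : R) (hl : 0 < l)
  (tauI : pt -> nat -> R) (eI : pt -> nat -> nat -> R) (vv : pt -> nat -> R)
  (Hinv : forall p, inM l p -> projective_inverse (tauB l) (eB l) tauI eI p)
  (Hv0 : forall p, inM l p -> sumM (fun mu => tauI p mu * vv p mu) = 0)
  (HvF : forall p a, inM l p -> (a = 1 \/ a = 2)%nat ->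
           sumM (fun mu => eI p mu a * vv p mu) = vFB l p a) :
  (forall p mu a, inM l p -> (mu <= 2)%nat -> (a = 1 \/ a = 2)%nat ->
     omega1 (tauB l) (eB l) (mB l) tauI eI p mu a = 0) /\
  (forall z0 : Sp, majorana z0 -> z0 <> spzero ->
     forall p, inM l p ->
       majorana (zetaPlus l z0 p) /\ zetaPlus l z0 p <> spzero /\
       Splus (tauB l) (eB l) (mB l) tauI eI vB uB vv (zetaPlus l z0) p) /\
  (exists z0 z1 : Sp, majorana z0 /\ majorana z1 /\ z0 <> spzero /\ z1 <> spzero /\
     forall alpha beta : R,
       (forall p, inM l p ->
          spadd (spscal alpha (zetaPlus l z0 p)) (spscal beta (zetaPlus l z1 p)) = spzero) ->
       alpha = 0 /\ beta = 0).
Proof.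
split; [|split].
- intros p mu a H _ Ha. apply (omega1_zero l hl tauI eI Hinv); auto.
- intros z0 Hm Hnz p H. split; [|split].
  + apply majorana_iff in Hm. destruct Hm as [h1 h2]. apply majorana_iff.
    destruct (zeta_expl l z0 p) as (c1 & c2 & c3 & c4). rewrite c2, c4, h1, h2. split; ring.
  + intros Hz. apply Hnz. destruct (zeta_expl l z0 p) as (c1 & c2 & c3 & c4).
    rewrite Hz in c1, c2, c3, c4. cbn [fst snd spzero RtoC] in c1, c2, c3, c4.
    assert (He : exp (kap l p / 2) <> 0) by apply Rgt_not_eq, exp_pos.
    assert (k1 : cos (PI/8) * fst (fst z0) + sin (PI/8) * fst (snd z0) = 0)
      by (apply (Rmult_eq_reg_l (exp (kap l p / 2))); auto; lra).
    assert (k2 : cos (PI/8) * snd (fst z0) + sin (PI/8) * snd (snd z0) = 0)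
      by (apply (Rmult_eq_reg_l (exp (kap l p / 2))); auto; lra).
    assert (k3 : - sin (PI/8) * fst (fst z0) + cos (PI/8) * fst (snd z0) = 0)
      by (apply (Rmult_eq_reg_l (exp (kap l p / 2))); auto; lra).
    assert (k4 : - sin (PI/8) * snd (fst z0) + cos (PI/8) * snd (snd z0) = 0)
      by (apply (Rmult_eq_reg_l (exp (kap l p / 2))); auto; lra).
    destruct (trig_inv _ _ _ _ _ k1 k3) as [a1 a2].
    destruct (trig_inv _ _ _ _ _ k2 k4) as [b1 b2].
    destruct z0 as [[a b] [c d]]; cbn [fst snd] in *. unfold spzero, RtoC.
    rewrite a1, a2, b1, b2. f_equal; f_equal; ring.
  + exact (splus_holds l hl tauI eI vv Hinv Hv0 HvF z0 p H).
- exists (@pair C C (RtoC 1) (RtoC 0)), (@pair C C (RtoC 0) (RtoC 1)).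
  split; [apply majorana_iff; cbn [fst snd RtoC]; auto|].
  split; [apply majorana_iff; cbn [fst snd RtoC]; auto|].
  split; [intro Hz; injection Hz; intros; lra|].
  split; [intro Hz; injection Hz; intros; lra|].
  intros al be Hab.
  assert (H0 : inM l (0, 0, 0)) by (unfold inM, rsq; simpl; nra).
  specialize (Hab _ H0).
  apply (f_equal (fun z => (fst (fst z), fst (snd z)))) in Hab.
  unfold spadd, spscal, Cplus, Cmult in Hab. cbn [fst snd] in Hab.
  destruct (zeta_expl l (@pair C C (RtoC 1) (RtoC 0)) (0,0,0)) as (c1 & c2 & c3 & c4).
  destruct (zeta_expl l (@pair C C (RtoC 0) (RtoC 1)) (0,0,0)) as (d1 & d2 & d3 & d4).
  cbn [fst snd RtoC] in c1, c2, c3, c4, d1, d2, d3, d4.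
  rewrite c1, c2, c3, c4, d1, d2, d3, d4 in Hab.
  injection Hab; intros h2 h1.
  set (e := exp (kap l (0,0,0) / 2)) in *.
  assert (He : e <> 0) by apply Rgt_not_eq, exp_pos.
  assert (k1 : cos (PI/8) * al + sin (PI/8) * be = 0).
  { apply (Rmult_eq_reg_l e); auto. match type of h1 with ?L = _ => transitivity L end; [ring | rewrite h1; ring]. }
  assert (k3 : - sin (PI/8) * al + cos (PI/8) * be = 0).
  { apply (Rmult_eq_reg_l e); auto. match type of h2 with ?L = _ => transitivity L end; [ring | rewrite h2; ring]. }
  destruct (trig_inv _ _ _ _ _ k1 k3) as [a1 a2]. rewrite a1, a2. split; ring.
Qed.
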